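(* For all integers $n>1$, $$c_{\mathbb{Z}^2}(n)=c_{TS}(n,2)=c_{LS}(n,2)=\lfloor 2n-2\sqrt{n}\rfloor .$$
   Context: A packing of disks in $\mathbb{E}^2$ is a family of disks with pairwise disjoint interiors. A packing is totally separable (a TS-packing) if any two of its disks can be separated by a line disjoint from the interior of every disk of the packing. A packing $\mathcal{P}$ is locally separable (an LS-packing) if each disk of $\mathcal{P}$ together with the disks of $\mathcal{P}$ tangent to it form a TS-packing. The contact number $c(\mathcal{P})$ is the number of unordered pairs of tangent disks of $\mathcal{P}$. $c_{TS}(n,2)$ (resp. $c_{LS}(n,2)$) denotes the largest contact number of a TS-packing (resp. LS-packing) of $n$ congruent disks in $\mathbb{E}^2$. $c_{\mathbb{Z}^2}(n)$ denotes the largest contact number of a packing of $n$ disks of diameter $1$ whose centers are distinct points of the integer lattice $\mathbb{Z}^2$. *)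

(* Defs.v *)
From HB Require Import structures.
From mathcomp Require Import all_boot all_order all_algebra.
From mathcomp Require Import all_classical all_reals.
Set Implicit Arguments. Unset Strict Implicit. Unset Printing Implicit Defensive.
Import Order.TTheory GRing.Theory Num.Theory.
Local Open Scope ring_scope.
Local Open Scope classical_set_scope.

Section Disks.
Variable R : realType.
Notation P2 := (R * R)%type.

Definition cdisk (c : P2) (r : R) : set P2 :=
  [set x | (x.1 - c.1) ^+ 2 + (x.2 - c.2) ^+ 2 <= r ^+ 2].
Definition odisk (c : P2) (r : R) : set P2 :=
  [set x | (x.1 - c.1) ^+ 2 + (x.2 - c.2) ^+ 2 < r ^+ 2].

Definition lin (a : P2) (x : P2) : R := a.1 * x.1 + a.2 * x.2.
Definition line (a : P2) (b : R) : set P2 := [set x | lin a x = b].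

(* A family of n congruent disks of radius r with centers c i (i < n). *)
Definition packing (n : nat) (r : R) (c : 'I_n -> P2) : Prop :=
  0 < r /\ forall i j : 'I_n, i != j -> odisk (c i) r `&` odisk (c j) r = set0.

Definition tangent (n : nat) (r : R) (c : 'I_n -> P2) (i j : 'I_n) : Prop :=
  i != j /\ cdisk (c i) r `&` cdisk (c j) r !=set0.

Definition TS_on (n : nat) (r : R) (c : 'I_n -> P2) (S : set 'I_n) : Prop :=
  forall i j, S i -> S j -> i != j ->
    exists (a : P2) (b : R), a != (0, 0) /\
      (forall x, cdisk (c i) r x -> lin a x <= b) /\
      (forall x, cdisk (c j) r x -> b <= lin a x) /\
      (forall k, S k -> line a b `&` odisk (c k) r = set0).

Definition TS_packing (n : nat) (r : R) (c : 'I_n -> P2) : Prop :=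
  packing r c /\ TS_on r c setT.

Definition LS_packing (n : nat) (r : R) (c : 'I_n -> P2) : Prop :=
  packing r c /\
  forall i : 'I_n, TS_on r c ([set i] `|` [set j | tangent r c i j]).

Definition Z2_packing (n : nat) (r : R) (c : 'I_n -> P2) : Prop :=
  r = 2^-1 /\ packing r c /\ injective c /\
  forall i, exists z1 z2 : int, c i = (z1%:~R, z2%:~R).

Definition contact_number (n : nat) (r : R) (c : 'I_n -> P2) : nat :=
  #|[pred p : 'I_n * 'I_n | (p.1 < p.2)%N && `[< tangent r c p.1 p.2 >]]|.

Definition largest_contact (n : nat) (Pk : R -> ('I_n -> P2) -> Prop) (k : int) : Prop :=
  (exists r c, Pk r c /\ (contact_number r c)%:Z = k) /\
  (forall r c, Pk r c -> ((contact_number r c)%:Z <= k)%R).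

End Disks.

(* Main.v *)
Require Import Defs.
From HB Require Import structures.
From mathcomp Require Import all_boot all_order all_algebra.
From mathcomp Require Import all_classical all_reals.
From mathcomp Require Import ring lra zify.
Import Order.TTheory GRing.Theory Num.Theory.
Local Open Scope ring_scope.
Local Open Scope classical_set_scope.
Set Implicit Arguments. Unset Strict Implicit. Unset Printing Implicit Defensive.

Section Geo.
Variable R : realType.
Implicit Types (x y ci cj ck a : (R * R)%type) (r b : R).

Lemma core_half (a1 a2 s r p1 p2 q1 q2 Lj Lk Li b : R) :
  0 < s -> s ^+ 2 = a1 ^+ 2 + a2 ^+ 2 -> 0 < r ->
  p1 ^+ 2 + p2 ^+ 2 <= 4 * r ^+ 2 ->
  a1 * p1 + a2 * p2 = Lj - Li -> a1 * q1 + a2 * q2 = Lk - Li ->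
  Lj <= b - r * s -> b + r * s <= Lk -> b + r * s <= Li ->
  p1 * q1 + p2 * q2 <= 0.
Proof.
move=> s0 sE r0 hp hap haq hj hk hi.
have h1 : (s * p1 + 2 * r * a1) ^+ 2 + (s * p2 + 2 * r * a2) ^+ 2 <= 0.
  have -> : (s * p1 + 2 * r * a1) ^+ 2 + (s * p2 + 2 * r * a2) ^+ 2 =
     s^+2 * (p1 ^+ 2 + p2 ^+ 2) + 4 * r * s * (a1 * p1 + a2 * p2) + 4 * r^+2 * (a1 ^+ 2 + a2 ^+ 2).
    by ring.
  rewrite hap -sE.
  have : s ^+ 2 * (p1 ^+ 2 + p2 ^+ 2) <= s^+2 * (4 * r ^+ 2).
    by rewrite ler_pM2l // exprn_gt0.
  have : 4 * r * s * (Lj - Li) <= 4 * r * s * (- 2 * r * s).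
    rewrite ler_pM2l; last by rewrite !mulr_gt0.
    lra.
  nra.
have e1 : s * p1 = - 2 * r * a1.
  have : (s * p1 + 2 * r * a1) ^+ 2 = 0.
    apply/eqP; rewrite eq_le sqr_ge0 andbT.
    have := sqr_ge0 (s * p2 + 2 * r * a2); lra.
  move/eqP; rewrite sqrf_eq0 => /eqP; lra.
have e2 : s * p2 = - 2 * r * a2.
  have : (s * p2 + 2 * r * a2) ^+ 2 = 0.
    apply/eqP; rewrite eq_le sqr_ge0 andbT.
    have := sqr_ge0 (s * p1 + 2 * r * a1); lra.
  move/eqP; rewrite sqrf_eq0 => /eqP; lra.
have hlp : s * (Lj - Li) = - 2 * r * s ^+ 2.
  have -> : s * (Lj - Li) = a1 * (s * p1) + a2 * (s * p2) by rewrite -hap; ring.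
  by rewrite e1 e2 sE; ring.
have hlp' : Lj - Li = - 2 * r * s.
  apply: (mulfI (lt0r_neq0 s0)); rewrite hlp; ring.
have hq : 0 <= Lk - Li by lra.
have : s * (p1 * q1 + p2 * q2) = - 2 * r * (Lk - Li).
  have -> : s * (p1 * q1 + p2 * q2) = (s * p1) * q1 + (s * p2) * q2 by ring.
  by rewrite e1 e2 -haq; ring.
nra.
Qed.


Lemma sqr_swap (x y : R) : (x - y) ^+ 2 = (y - x) ^+ 2.
Proof. by ring. Qed.

Lemma sep_angle ci cj ck r a b : 0 < r -> a != (0, 0) ->
  (ci.1 - cj.1) ^+ 2 + (ci.2 - cj.2) ^+ 2 <= 4 * r ^+ 2 ->
  (ci.1 - ck.1) ^+ 2 + (ci.2 - ck.2) ^+ 2 <= 4 * r ^+ 2 ->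
  (forall x, cdisk cj r x -> lin a x <= b) ->
  (forall x, cdisk ck r x -> b <= lin a x) ->
  line a b `&` odisk ci r = set0 ->
  (cj.1 - ci.1) * (ck.1 - ci.1) + (cj.2 - ci.2) * (ck.2 - ci.2) <= 0.
Proof.
move=> r0 a0 hj0 hk0 hj hk hl.
set A := a.1 ^+ 2 + a.2 ^+ 2.
have A0 : 0 < A.
  rewrite lt_neqAle addr_ge0 ?sqr_ge0 // andbT; apply/negP => /eqP A0.
  have h1 : a.1 ^+ 2 = 0 by have := sqr_ge0 a.1; have := sqr_ge0 a.2; rewrite /A in A0; lra.
  have h2 : a.2 ^+ 2 = 0 by have := sqr_ge0 a.1; have := sqr_ge0 a.2; rewrite /A in A0; lra.
  move/eqP: h1; rewrite sqrf_eq0 => /eqP h1; move/eqP: h2; rewrite sqrf_eq0 => /eqP h2.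
  by move/negP: a0; apply; rewrite [a]surjective_pairing h1 h2.
set s := Num.sqrt A.
have s0 : 0 < s by rewrite sqrtr_gt0.
have sE : s ^+ 2 = A by rewrite sqr_sqrtr // ltW.
have sn0 : s != 0 by rewrite gt_eqF.
have rsA : r / s * A = r * s by rewrite -sE; field.
have rsA2 : (r / s) ^+ 2 * A = r ^+ 2 by rewrite -sE; field.
have Hj : lin a cj + r * s <= b.
  have hx : cdisk cj r (cj.1 + r / s * a.1, cj.2 + r / s * a.2).
    rewrite /cdisk /=.
    have -> : (cj.1 + r / s * a.1 - cj.1) ^+ 2 + (cj.2 + r / s * a.2 - cj.2) ^+ 2
      = (r / s) ^+ 2 * A by rewrite /A; ring.
    by rewrite rsA2.
  have := hj _ hx.
  have -> : lin a (cj.1 + r / s * a.1, cj.2 + r / s * a.2) = lin a cj + r / s * A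
    by rewrite /lin /A /=; ring.
  by rewrite rsA.
have Hk : b + r * s <= lin a ck.
  have hx : cdisk ck r (ck.1 - r / s * a.1, ck.2 - r / s * a.2).
    rewrite /cdisk /=.
    have -> : (ck.1 - r / s * a.1 - ck.1) ^+ 2 + (ck.2 - r / s * a.2 - ck.2) ^+ 2
      = (r / s) ^+ 2 * A by rewrite /A; ring.
    by rewrite rsA2.
  have := hk _ hx.
  have -> : lin a (ck.1 - r / s * a.1, ck.2 - r / s * a.2) = lin a ck - r / s * A
    by rewrite /lin /A /=; ring.
  by rewrite rsA => ?; lra.
have Hi : r ^+ 2 * A <= (b - lin a ci) ^+ 2.
  rewrite leNgt; apply/negP => hlt.
  set t := (b - lin a ci) / A.
  have : (line a b `&` odisk ci r) (ci.1 + t * a.1, ci.2 + t * a.2).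
    rewrite /setI /mkset; split.
      rewrite /line /lin /=.
      have -> : a.1 * (ci.1 + t * a.1) + a.2 * (ci.2 + t * a.2) = lin a ci + t * A
        by rewrite /lin /A; ring.
      rewrite /t; field; exact: lt0r_neq0.
    rewrite /odisk /=.
    have -> : (ci.1 + t * a.1 - ci.1) ^+ 2 + (ci.2 + t * a.2 - ci.2) ^+ 2
      = (b - lin a ci) ^+ 2 / A by rewrite /t /A; field; exact: lt0r_neq0.
    by rewrite ltr_pdivrMr.
  by rewrite hl.
have rs0 : 0 < r * s by rewrite mulr_gt0.
have [Hi1|Hi2] : b + r * s <= lin a ci \/ lin a ci <= b - r * s.
  case: (lerP (b + r * s) (lin a ci)) => h; [by left | right].
  rewrite leNgt; apply/negP => h2.
  have : (b - lin a ci - r * s) * (b - lin a ci + r * s) < 0.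
    by rewrite nmulr_rlt0; lra.
  rewrite -sE in Hi; nra.
- apply: (@core_half a.1 a.2 s r _ _ _ _ (lin a cj) (lin a ck) (lin a ci) b) => //.
  + by rewrite (sqr_swap cj.1) (sqr_swap cj.2).
  + by rewrite /lin; ring.
  + by rewrite /lin; ring.
  + lra.
- have := (@core_half (- a.1) (- a.2) s r (ck.1 - ci.1) (ck.2 - ci.2) (cj.1 - ci.1) (cj.2 - ci.2)
     (- lin a ck) (- lin a cj) (- lin a ci) (- b)).
  have -> : (ck.1 - ci.1) * (cj.1 - ci.1) + (ck.2 - ci.2) * (cj.2 - ci.2) =
     (cj.1 - ci.1) * (ck.1 - ci.1) + (cj.2 - ci.2) * (ck.2 - ci.2) by ring.
  apply => //.
  + by rewrite sE /A; ring.
  + by rewrite (sqr_swap ck.1) (sqr_swap ck.2).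
  + by rewrite /lin; ring.
  + by rewrite /lin; ring.
  + lra.
  + lra.
  + lra.
Qed.

Definition dot (x y : R * R) := x.1 * y.1 + x.2 * y.2.
Definition vsub (x y : R * R) : R * R := (x.1 - y.1, x.2 - y.2).

Lemma tangent_sym n r (c : 'I_n -> R * R) i j : tangent r c i j -> tangent r c j i.
Proof. by case=> ij [x [h1 h2]]; split; [rewrite eq_sym | exists x]. Qed.

Lemma tangent_dist n r (c : 'I_n -> R * R) i j : tangent r c i j ->
  ((c i).1 - (c j).1) ^+ 2 + ((c i).2 - (c j).2) ^+ 2 <= 4 * r ^+ 2.
Proof.
case=> _ [x [h1 h2]]; rewrite /cdisk /= in h1 h2.
have : ((c i).1 - (c j).1) ^+ 2 + ((c i).2 - (c j).2) ^+ 2 <=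
  2 * ((x.1 - (c i).1) ^+ 2 + (x.2 - (c i).2) ^+ 2) +
  2 * ((x.1 - (c j).1) ^+ 2 + (x.2 - (c j).2) ^+ 2).
  rewrite -subr_ge0.
  have -> : 2 * ((x.1 - (c i).1) ^+ 2 + (x.2 - (c i).2) ^+ 2) +
    2 * ((x.1 - (c j).1) ^+ 2 + (x.2 - (c j).2) ^+ 2) -
    (((c i).1 - (c j).1) ^+ 2 + ((c i).2 - (c j).2) ^+ 2) =
    (2 * x.1 - (c i).1 - (c j).1) ^+ 2 + (2 * x.2 - (c i).2 - (c j).2) ^+ 2 by ring.
  by rewrite addr_ge0 ?sqr_ge0.
lra.
Qed.

Lemma packing_inj n r (c : 'I_n -> R * R) : packing r c -> injective c.
Proof.
case=> r0 hd i j cij; apply/eqP; apply: contraT => ij.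
have := hd i j ij; rewrite -cij => h.
have : (odisk (c i) r `&` odisk (c i) r) (c i).
  rewrite /setI /mkset /odisk /=; split; rewrite !subrr expr0n /= addr0 exprn_gt0 //.
by rewrite h.
Qed.

Definition angle_prop n (c : 'I_n -> R * R) (T : 'I_n -> 'I_n -> Prop) :=
  forall i j k, T i j -> T i k -> j != k -> dot (vsub (c j) (c i)) (vsub (c k) (c i)) <= 0.

Lemma LS_angle n r (c : 'I_n -> R * R) : LS_packing r c -> angle_prop c (tangent r c).
Proof.
case=> [[r0 _] hS] i j k tij tik jk.
have [a [b [a0 [hj [hk hl]]]]] := hS i j k (or_intror tij) (or_intror tik) jk.
rewrite /dot /vsub /=.
apply: (sep_angle r0 a0 (tangent_dist tij) (tangent_dist tik) hj hk).
exact: hl (or_introl erefl).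
Qed.

Lemma TS_LS n r (c : 'I_n -> R * R) : TS_packing r c -> LS_packing r c.
Proof.
case=> hp hT; split => // i j k _ _ jk.
have [a [b [a0 [hj [hk hl]]]]] := hT j k I I jk.
by exists a, b; split => //; split => //; split => // m _; exact: hl.
Qed.


Lemma int_sqr_half (w : int) : 1 / 4 <= ((w%:~R : R) + 1 / 2) ^+ 2.
Proof.
have [w0|w0] := lerP 0 w.
  have : (0 : R) <= w%:~R by rewrite ler0z.
  move=> h; nra.
have : (w%:~R : R) <= -1.
  have : w <= -1 by lia.
  by move=> h; rewrite -(ler_int R) in h.
move=> h; nra.
Qed.


Lemma lin_sub a x y : lin a x - lin a y = lin a (vsub x y).
Proof. by rewrite /lin /vsub /=; ring. Qed.

Lemma grid_sep n (c : 'I_n -> R * R) i j a :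
  a != (0, 0) -> (forall v, (lin a v) ^+ 2 <= v.1 ^+ 2 + v.2 ^+ 2) ->
  (forall k, exists z : int, lin a (c k) = z%:~R) -> lin a (c i) < lin a (c j) ->
  exists (a0 : R * R) (b : R), a0 != (0, 0) /\
      (forall x, cdisk (c i) (2^-1) x -> lin a0 x <= b) /\
      (forall x, cdisk (c j) (2^-1) x -> b <= lin a0 x) /\
      (forall k, setT k -> line a0 b `&` odisk (c k) (2^-1) = set0).
Proof.
move=> a0 ha hz hij.
have [zi ezi] := hz i; have [zj ezj] := hz j.
have hij1 : lin a (c i) + 1 <= lin a (c j).
  rewrite ezi ezj in hij *; rewrite ltr_int in hij.
  have : zi + 1 <= zj by lia.
  by rewrite -(ler_int R) rmorphD /=.
have h4 : (2^-1 : R) ^+ 2 = 1 / 4 by rewrite expr2; field.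
exists a, (lin a (c i) + 1 / 2); split => //; split; [|split].
- move=> x hx.
  have {}hx : (x.1 - (c i).1) ^+ 2 + (x.2 - (c i).2) ^+ 2 <= 1 / 4 by rewrite -h4; exact: hx.
  have := ha (vsub x (c i)); rewrite -lin_sub /vsub /= => h.
  have : (lin a x - lin a (c i)) ^+ 2 <= 1 / 4 by lra.
  move=> h'; nra.
- move=> x hx.
  have {}hx : (x.1 - (c j).1) ^+ 2 + (x.2 - (c j).2) ^+ 2 <= 1 / 4 by rewrite -h4; exact: hx.
  have := ha (vsub x (c j)); rewrite -lin_sub /vsub /= => h.
  have : (lin a x - lin a (c j)) ^+ 2 <= 1 / 4 by lra.
  move=> h'; nra.
- move=> k _; rewrite -subset0 => x [hl hx]; rewrite /line in hl.
  have {}hx : (x.1 - (c k).1) ^+ 2 + (x.2 - (c k).2) ^+ 2 < 1 / 4 by rewrite -h4; exact: hx.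
  have := ha (vsub x (c k)); rewrite -lin_sub /vsub /= hl => h.
  have [zk ezk] := hz k.
  have := int_sqr_half (zi - zk); rewrite rmorphB /= -ezi -ezk => h2.
  have : lin a (c i) + 1 / 2 - lin a (c k) = lin a (c i) - lin a (c k) + 1 / 2 by ring.
  move=> e; lra.
Qed.


Lemma Z2_TS n r (c : 'I_n -> R * R) : Z2_packing r c -> TS_packing r c.
Proof.
case=> -> [hp [hinj hz]]; split => // i j _ _ ij.
have cij : c i != c j by rewrite (inj_eq hinj).
have nz1 : ((1 : R), (0 : R)) != (0, 0) by rewrite xpair_eqE oner_eq0.
have nz2 : (- (1 : R), (0 : R)) != (0, 0) by rewrite xpair_eqE oppr_eq0 oner_eq0.
have nz3 : ((0 : R), (1 : R)) != (0, 0) by rewrite xpair_eqE oner_eq0 andbF.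
have nz4 : ((0 : R), - (1 : R)) != (0, 0) by rewrite xpair_eqE oppr_eq0 oner_eq0 andbF.
have l1 v : lin (1, 0) v = v.1 by rewrite /lin /=; ring.
have l2 v : lin (-1, 0) v = - v.1 by rewrite /lin /=; ring.
have l3 v : lin (0, 1) v = v.2 by rewrite /lin /=; ring.
have l4 v : lin (0, -1) v = - v.2 by rewrite /lin /=; ring.
have [h|h|h] := ltgtP (c i).1 (c j).1.
- apply: (grid_sep nz1) => [v|k|]; rewrite ?l1 //.
    by have := sqr_ge0 v.2; lra.
  by have [z1 [z2 ->]] := hz k; exists z1.
- apply: (grid_sep nz2) => [v|k|]; rewrite ?l2 ?ltrN2 //.
    by rewrite sqrrN; have := sqr_ge0 v.2; lra.
  by have [z1 [z2 ->]] := hz k; exists (- z1); rewrite rmorphN.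
have h2 : (c i).2 != (c j).2.
  apply: contraNneq cij => e.
  by rewrite [c i]surjective_pairing [c j]surjective_pairing h e.
have [h'|h'|h'] := ltgtP (c i).2 (c j).2.
- apply: (grid_sep nz3) => [v|k|]; rewrite ?l3 //.
    by have := sqr_ge0 v.1; lra.
  by have [z1 [z2 ->]] := hz k; exists z2.
- apply: (grid_sep nz4) => [v|k|]; rewrite ?l4 ?ltrN2 //.
    by rewrite sqrrN; have := sqr_ge0 v.1; lra.
  by have [z1 [z2 ->]] := hz k; exists (- z2); rewrite rmorphN.
by rewrite h' eqxx in h2.
Qed.

End Geo.

Section Cones.
Variable R : realType.
Implicit Types (e f : (R * R)%type).

Definition coneE e : bool := (0 < e.1) && (- e.1 <= e.2) && (e.2 < e.1).
Definition rotm (b : bool) e : R * R := if b then (e.2, - e.1) else e.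
Definition K b e := coneE (rotm b e).
Definition vneg e : R * R := (- e.1, - e.2).
Definition vadd e f : R * R := (e.1 + f.1, e.2 + f.2).

Lemma vadd0 e : vadd e (0, 0) = e.
Proof. by case: e => x y; rewrite /vadd /= !addr0. Qed.

Lemma coneE_dot e f : coneE e -> coneE f -> 0 < dot e f.
Proof.
case: e f => x1 y1 [x2 y2]; rewrite /coneE /dot /= => /andP[/andP[h1 h2] h3] /andP[/andP[h4 h5] h6].
have [hy|hy] := lerP 0 y1; have [hy'|hy'] := lerP 0 y2; nra.
Qed.

Lemma K_dot b e f : K b e -> K b f -> 0 < dot e f.
Proof.
rewrite /K; case: b => /= h1 h2; have := coneE_dot h1 h2; rewrite /dot /=; lra.
Qed.

Lemma K_add b e f : K b e -> K b f -> K b (vadd e f).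
Proof.
rewrite /K /coneE; case: b => /=; case/andP => /andP[h1 h2] h3 /andP[/andP[h4 h5] h6];
  rewrite ?opprD; apply/andP; split; try apply/andP; try split; lra.
Qed.

Ltac pick_or4 k := apply/or4P; k; rewrite -?andbA; repeat (apply/andP; split); lra.

Lemma K_cover e : e != (0, 0) -> [|| K false e, K false (vneg e), K true e | K true (vneg e)].
Proof.
case: e => x y nz; rewrite /K /coneE /vneg /= ?opprK.
have [h1|h1] : (- x <= y) \/ (y < - x) by case: (lerP (- x) y); [left|right].
- have [h2|h2] : (y < x) \/ (x <= y) by case: (ltrP y x); [left|right].
    by pick_or4 ltac:(apply: Or41).
  have [h3|h3] : (- x < y) \/ (y = - x) by case: (ltrP (- x) y) => h; [left|right; lra].
    by pick_or4 ltac:(apply: Or43).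
  have x0 : x != 0.
    apply: contraNneq nz => x0; move: h3; rewrite x0 oppr0 => ->; by [].
  have : x < 0 by rewrite lt_neqAle x0 /=; lra.
  by move=> ?; pick_or4 ltac:(apply: Or42).
- have [h2|h2] : (y <= x) \/ (x < y) by case: (lerP y x); [left|right].
    by pick_or4 ltac:(apply: Or44).
  by pick_or4 ltac:(apply: Or42).
Qed.

Lemma K_disj e : K false e || K false (vneg e) -> K true e || K true (vneg e) -> False.
Proof.
case: e => x y; rewrite /K /coneE /vneg /=.
by case/orP => /andP[/andP[h1 h2] h3]; case/orP => /andP[/andP[h4 h5] h6]; lra.
Qed.

End Cones.


Section Iter.
Variable (X : eqType) (f : X -> X).
Hypothesis finj : forall x y, f x != x -> f y != y -> f x = f y -> x = y.

Lemma iter_relL k w v : f v != v -> f v = iter k f w ->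
  (exists j, v = iter j f w) \/ (exists j, w = iter j f v).
Proof.
elim: k w v => [|k IH] w v fv /= e.
  by right; exists 1%N.
have [fk|fk] := eqVneq (f (iter k f w)) (iter k f w).
  by apply: IH => //; rewrite e fk.
by left; exists k; apply: finj.
Qed.

Lemma iter_rel a b v v' : iter a f v = iter b f v' ->
  (exists j, v' = iter j f v) \/ (exists j, v = iter j f v').
Proof.
elim: a v => [|a IH] v e.
  by right; exists b.
move: e; rewrite iterSr => /IH [[j ->]|[j ej]].
  by left; exists j.+1; rewrite iterSr.
have [fv|fv] := eqVneq (f v) v.
  by right; exists j; rewrite -fv.
have [[j' ->]|[j' ->]] := iter_relL fv ej; [right|left]; by exists j'.
Qed.

Lemma iter_fix x k : f x = x -> iter k f x = x.
Proof. by move=> fx; elim: k => //= k ->. Qed.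

Lemma iter_fix_after v k m : f (iter k f v) = iter k f v -> (k <= m)%N ->
  iter m f v = iter k f v.
Proof.
move=> fk /subnK <-; rewrite iterD; exact: iter_fix.
Qed.

End Iter.

Section Chains.
Variable R : realType.
Variable n : nat.
Variable c : 'I_n -> R * R.
Variable T : 'I_n -> 'I_n -> Prop.
Hypothesis Tsym : forall i j, T i j -> T j i.
Hypothesis Tneq : forall i j, T i j -> i != j.
Hypothesis cinj : injective c.
Hypothesis hang : angle_prop c T.

Definition succ b (v : 'I_n) : 'I_n :=
  odflt v [pick w | `[< T v w >] && K b (vsub (c w) (c v))].

Lemma succ_spec b v : succ b v != v -> T v (succ b v) /\ K b (vsub (c (succ b v)) (c v)).
Proof.
rewrite /succ; case: pickP => [w /andP[/asboolP h1 h2]|_] /=; last by rewrite eqxx.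
by [].
Qed.

Lemma succ_eq b v w : T v w -> K b (vsub (c w) (c v)) -> succ b v = w.
Proof.
move=> tvw kw; rewrite /succ; case: pickP => [w' /andP[/asboolP h1 h2]|/(_ w)] /=.
  apply/eqP; apply: contraT => ww'.
  have := hang h1 tvw ww'.
  by rewrite leNgt (K_dot h2 kw).
by rewrite kw andbT => /asboolPn.
Qed.

Lemma vsub_neg (x y : R * R) : vsub x y = vneg (vsub y x).
Proof. by rewrite /vsub /vneg /=; congr pair; ring. Qed.

Lemma succ_inj b v1 v2 : succ b v1 != v1 -> succ b v2 != v2 -> succ b v1 = succ b v2 -> v1 = v2.
Proof.
move=> /succ_spec [t1 k1] /succ_spec [t2 k2] e.
rewrite e in t1 k1; set w := succ b v2 in t1 k1 t2 k2.
apply/eqP; apply: contraT => v12.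
have hd : 0 < dot (vsub (c v1) (c w)) (vsub (c v2) (c w)).
  have -> : dot (vsub (c v1) (c w)) (vsub (c v2) (c w)) =
          dot (vsub (c w) (c v1)) (vsub (c w) (c v2)) by rewrite /dot /vsub /=; ring.
  exact: K_dot k1 k2.
by have := hang (Tsym t1) (Tsym t2) v12; rewrite leNgt hd.
Qed.


Definition psi b (v : 'I_n) : R := (rotm b (c v)).1.

Lemma psi_lt b v : succ b v != v -> psi b v < psi b (succ b v).
Proof.
case/succ_spec => _; rewrite /K /coneE /psi /vsub; case: b => /= /andP[/andP[h _] _]; lra.
Qed.

Definition sink b v := iter n (succ b) v.

Lemma sink_fixed b v : succ b (sink b v) = sink b v.
Proof.
apply/eqP; apply: contraT => hn.
have nf k : (k <= n)%N -> succ b (iter k (succ b) v) != iter k (succ b) v.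
  move=> kn; apply: contraNneq hn => hk.
  by rewrite /sink (iter_fix_after hk kn) hk.
have mono j k : (j < k)%N -> (k <= n)%N -> psi b (iter j (succ b) v) < psi b (iter k (succ b) v).
  elim: k => // k IH jk kn.
  have kn' : (k <= n)%N by apply: ltnW.
  have h := psi_lt (nf k kn'); rewrite /= in h *.
  move: jk; rewrite ltnS leq_eqVlt => /orP[/eqP ->//|jk].
  exact: lt_trans (IH jk kn') h.
pose g (k : 'I_n.+1) := iter k (succ b) v.
have ginj : injective g.
  move=> j k e; apply/eqP; apply: contraT => jk.
  have [lt|lt] : (j < k)%N \/ (k < j)%N.
    by move: jk; rewrite neq_ltn => /orP[]; [left|right].
  - have := mono j k lt (ltn_ord _ : (k < n.+1)%N); rewrite /g in e; rewrite e.
    by rewrite ltxx.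
  - have := mono k j lt (ltn_ord _ : (j < n.+1)%N); rewrite /g in e; rewrite e.
    by rewrite ltxx.
by have := leq_card g ginj; rewrite !card_ord ltnn.
Qed.

Definition Kz b (e : R * R) := (e == (0, 0)) || K b e.

Lemma chain_cone b v j : Kz b (vsub (c (iter j (succ b) v)) (c v)).
Proof.
elim: j => [|j IH] /=.
  by rewrite /Kz /vsub !subrr eqxx.
set x := iter j (succ b) v in IH *.
have [fx|fx] := eqVneq (succ b x) x; first by rewrite fx.
have [_ kx] := succ_spec fx.
have -> : vsub (c (succ b x)) (c v) = vadd (vsub (c (succ b x)) (c x)) (vsub (c x) (c v)).
  by rewrite /vadd /vsub /=; congr pair; ring.
case/orP: IH => [/eqP ->|kv].
  by rewrite vadd0 /Kz kx orbT.
by rewrite /Kz (K_add kx kv) orbT.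
Qed.

Lemma sink_rel b v v' : sink b v = sink b v' ->
  Kz b (vsub (c v') (c v)) || Kz b (vneg (vsub (c v') (c v))).
Proof.
move/(iter_rel (@succ_inj b)) => [[j ->]|[j ->]].
  by rewrite chain_cone.
by rewrite -vsub_neg chain_cone orbT.
Qed.

Lemma sink_pair_inj : injective (fun v => (sink false v, sink true v)).
Proof.
move=> v v' [/sink_rel h1 /sink_rel h2].
apply: cinj; apply/eqP; apply: contraT => ne.
have nz : vsub (c v') (c v) != (0, 0).
  apply: contra ne => /eqP [] /eqP; rewrite subr_eq0 => /eqP e1 /eqP; rewrite subr_eq0 => /eqP e2.
  by rewrite eq_sym [c v]surjective_pairing [c v']surjective_pairing e1 e2.
have nz' : vneg (vsub (c v') (c v)) != (0, 0).
  apply: contra nz; rewrite /vneg !xpair_eqE !oppr_eq0 //.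
move: h1 h2; rewrite /Kz (negbTE nz) (negbTE nz') /=.
by move=> h1 h2; case: (K_disj h1 h2).
Qed.


Local Close Scope classical_set_scope.
Definition Pset := [set p : 'I_n * 'I_n | (p.1 < p.2)%N && `[< T p.1 p.2 >]].
Definition Fx b := [set v | succ b v == v].

Lemma card_sinks : (n <= #|Fx false| * #|Fx true|)%N.
Proof.
have e : n = #|(fun v => (sink false v, sink true v)) @: [set: 'I_n]|.
  by rewrite card_imset ?cardsT ?card_ord //; exact: sink_pair_inj.
rewrite {1}e -cardsX.
apply: subset_leq_card; apply/fintype.subsetP => _ /imsetP [v _ ->].
by rewrite finset.in_setX !inE !sink_fixed !eqxx.
Qed.

Definition PE b := [set p in Pset |
  K b (vsub (c p.2) (c p.1)) || K b (vneg (vsub (c p.2) (c p.1)))].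
Definition tail b (p : 'I_n * 'I_n) := if K b (vsub (c p.2) (c p.1)) then p.1 else p.2.

Lemma tail_spec b p : p \in PE b ->
  [/\ (p.1 < p.2)%N, succ b (tail b p) != tail b p &
   (p = (tail b p, succ b (tail b p)) \/ p = (succ b (tail b p), tail b p))].
Proof.
rewrite !inE => /andP[/andP[lt /asboolP tp] hk].
have n12 : p.1 != p.2 by rewrite neq_ltn lt.
rewrite /tail; case: ifP => k1.
  rewrite (succ_eq tp k1); split => //; first by rewrite eq_sym.
  by left; rewrite -surjective_pairing.
rewrite k1 /= -vsub_neg in hk.
rewrite (succ_eq (Tsym tp) hk); split => //.
by right; rewrite -surjective_pairing.
Qed.

Lemma card_PE b : (#|PE b| <= n - #|Fx b|)%N.
Proof.
have -> : (n - #|Fx b| = #|~: Fx b|)%N.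
  by have h := cardsC (Fx b); rewrite card_ord in h; lia.
rewrite -(card_in_imset (f := tail b)).
  apply: subset_leq_card; apply/fintype.subsetP => _ /imsetP [p hp ->].
  by have [_ h _] := tail_spec hp; rewrite !inE.
move=> p q hp hq e.
have [lp _ [ep|ep]] := tail_spec hp; have [lq _ [eq|eq]] := tail_spec hq;
  rewrite ep eq e //.
- by move: lp lq; rewrite ep eq e /= => a b'; have := ltn_trans a b'; rewrite ltnn.
- by move: lp lq; rewrite ep eq e /= => a b'; have := ltn_trans a b'; rewrite ltnn.
Qed.

Lemma card_P : (#|Pset| <= (n - #|Fx false|) + (n - #|Fx true|))%N.
Proof.
apply: leq_trans (leq_add (card_PE false) (card_PE true)).
apply: leq_trans (leq_card_setU _ _).
apply: subset_leq_card; apply/fintype.subsetP => p hp.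
have := hp; rewrite inE => /andP[lt /asboolP tp].
have nz : vsub (c p.2) (c p.1) != (0, 0).
  have : p.2 != p.1 by rewrite neq_ltn lt orbT.
  apply: contra => /eqP [] /eqP; rewrite subr_eq0 => /eqP e1 /eqP; rewrite subr_eq0 => /eqP e2.
  by apply/eqP; apply: cinj; rewrite [c p.2]surjective_pairing [c p.1]surjective_pairing e1 e2.
have := K_cover nz; rewrite !inE lt (asboolT tp) /=.
by case/or4P => ->; rewrite ?orbT.
Qed.

End Chains.

Lemma upper_bound (R : realType) n r (c : 'I_n -> R * R) : packing r c ->
  angle_prop c (tangent r c) ->
  ((contact_number r c)%:Z <= Num.floor (2 * n%:R - 2 * Num.sqrt (n%:R : R)))%R.
Proof.
move=> hp hang.
have cinj := packing_inj hp.
have hP := card_P (@tangent_sym R n r c) cinj hang.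
have hS := card_sinks (@tangent_sym R n r c) cinj hang.
set a := #|Fx c (tangent r c) false| in hP hS.
set b := #|Fx c (tangent r c) true| in hP hS.
have an : (a <= n)%N by have := max_card (Fx c (tangent r c) false); rewrite card_ord.
have bn : (b <= n)%N by have := max_card (Fx c (tangent r c) true); rewrite card_ord.
have ce : contact_number r c = #|Pset (tangent r c)| by rewrite /contact_number /Pset cardsE.
rewrite ce floor_ge_int -pmulrn.
set m := #|Pset (tangent r c)| in hP *.
have hm : (m + a + b <= 2 * n)%N by lia.
have hm' : (m%:R : R) + a%:R + b%:R <= 2 * n%:R.
  by rewrite -!natrD -natrM ler_nat.
have hab : (n%:R : R) <= a%:R * b%:R by rewrite -natrM ler_nat.
set s := Num.sqrt (n%:R : R).
have s0 : 0 <= s by apply: sqrtr_ge0.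
have sE : s ^+ 2 = n%:R by rewrite sqr_sqrtr // ler0n.
have a0 : (0 : R) <= a%:R by apply: ler0n.
have b0 : (0 : R) <= b%:R by apply: ler0n.
have h2 : 2 * s <= a%:R + b%:R.
  have : 4 * s ^+ 2 <= (a%:R + b%:R) ^+ 2.
    rewrite sE; have := sqr_ge0 ((a%:R : R) - b%:R); nra.
  nra.
lra.
Qed.

Local Close Scope classical_set_scope.
Lemma card_le_bound (n m : nat) (A : {set 'I_n}) (f : 'I_n -> nat) :
  {in A &, injective f} -> (forall x, x \in A -> (f x < m)%N) -> (#|A| <= m)%N.
Proof.
move=> finj fb.
have -> : #|A| = size (map f (enum A)) by rewrite size_map cardE.
apply: (leq_trans _ (eq_leq (size_iota 0 m))).
apply: uniq_leq_size.
  rewrite map_inj_in_uniq ?enum_uniq //.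
  by move=> x y; rewrite !mem_enum; exact: finj.
by move=> y /mapP [x]; rewrite mem_enum => /fb hx ->; rewrite mem_iota.
Qed.


Lemma int_sq_ge1 (R : realType) (d1 d2 : int) : (d1, d2) != (0, 0) ->
  (1 : R) <= (d1%:~R) ^+ 2 + (d2%:~R) ^+ 2.
Proof.
move=> nz.
have : (1 <= d1 ^+ 2 + d2 ^+ 2)%R.
  have [e1|e1] := eqVneq d1 0; have [e2|e2] := eqVneq d2 0.
  - by move: nz; rewrite e1 e2 eqxx.
  - have : (1 <= d2 ^+ 2)%R by rewrite expr2; nia.
    by rewrite e1; lia.
  - have : (1 <= d1 ^+ 2)%R by rewrite expr2; nia.
    by rewrite e2; lia.
  - have : (1 <= d1 ^+ 2)%R by rewrite expr2; nia.
    have : (0 <= d2 ^+ 2)%R by apply: sqr_ge0.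
    lia.
by rewrite -(ler_int R) rmorphD /= !rmorphXn.
Qed.

Lemma Z2_of_int (R : realType) n (c : 'I_n -> R * R) : injective c ->
  (forall i, exists z1 z2 : int, c i = (z1%:~R, z2%:~R)) -> Z2_packing (2^-1) c.
Proof.
move=> cinj hz; split; first by []; split; last by split.
split; first by rewrite invr_gt0 ltr0n.
move=> i j ij; rewrite -subset0 => x [hi hj].
have h4 : (2^-1 : R) ^+ 2 = 1 / 4 by rewrite expr2; field.
have {}hi : (x.1 - (c i).1) ^+ 2 + (x.2 - (c i).2) ^+ 2 < 1 / 4 by rewrite -h4; exact: hi.
have {}hj : (x.1 - (c j).1) ^+ 2 + (x.2 - (c j).2) ^+ 2 < 1 / 4 by rewrite -h4; exact: hj.
have [a1 [a2 ei]] := hz i; have [b1 [b2 ej]] := hz j.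
have nz : (a1 - b1, a2 - b2) != (0, 0).
  apply: contraNneq ij => -[/subr0_eq e1 /subr0_eq e2].
  by apply/eqP; apply: cinj; rewrite ei ej e1 e2.
have h : 1 <= ((c i).1 - (c j).1) ^+ 2 + ((c i).2 - (c j).2) ^+ 2.
  by rewrite ei ej /=; have := int_sq_ge1 R nz; rewrite !rmorphB.
have : ((c i).1 - (c j).1) ^+ 2 + ((c i).2 - (c j).2) ^+ 2 <=
  2 * ((x.1 - (c i).1) ^+ 2 + (x.2 - (c i).2) ^+ 2) +
  2 * ((x.1 - (c j).1) ^+ 2 + (x.2 - (c j).2) ^+ 2).
  rewrite -subr_ge0.
  have -> : 2 * ((x.1 - (c i).1) ^+ 2 + (x.2 - (c i).2) ^+ 2) +
    2 * ((x.1 - (c j).1) ^+ 2 + (x.2 - (c j).2) ^+ 2) -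
    (((c i).1 - (c j).1) ^+ 2 + ((c i).2 - (c j).2) ^+ 2) =
    (2 * x.1 - (c i).1 - (c j).1) ^+ 2 + (2 * x.2 - (c i).2 - (c j).2) ^+ 2 by ring.
  by rewrite addr_ge0 ?sqr_ge0.
lra.
Qed.

Lemma tangent_of_dist (R : realType) n (c : 'I_n -> R * R) i j : i != j ->
  ((c i).1 - (c j).1) ^+ 2 + ((c i).2 - (c j).2) ^+ 2 = 1 -> tangent (2^-1) c i j.
Proof.
move=> ij d; split => //.
have h4 : (2^-1 : R) ^+ 2 = 1 / 4 by rewrite expr2; field.
exists (((c i).1 + (c j).1) / 2, ((c i).2 + (c j).2) / 2); split.
- rewrite /cdisk /=.
  have -> : (((c i).1 + (c j).1) / 2 - (c i).1) ^+ 2 + (((c i).2 + (c j).2) / 2 - (c i).2) ^+ 2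
    = (((c i).1 - (c j).1) ^+ 2 + ((c i).2 - (c j).2) ^+ 2) / 4 by field.
  by rewrite d h4.
- rewrite /cdisk /=.
  have -> : (((c i).1 + (c j).1) / 2 - (c j).1) ^+ 2 + (((c i).2 + (c j).2) / 2 - (c j).2) ^+ 2
    = (((c i).1 - (c j).1) ^+ 2 + ((c i).2 - (c j).2) ^+ 2) / 4 by field.
  by rewrite d h4.
Qed.

Section Constr.
Variable R : realType.
Variables n w h : nat.
Hypothesis w2 : (2 <= w)%N.
Hypothesis wn : (w <= n)%N.
Hypothesis hn : (h <= n)%N.
Hypothesis nwh : (n <= w * h)%N.

Definition gc (t : 'I_n) : R * R := ((t %% w)%:R, (t %/ w)%:R).

Definition ordsub (j : 'I_n) (k : nat) : 'I_n :=
  Ordinal (leq_ltn_trans (leq_subr k j) (ltn_ord j)).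

Lemma gc_inj : injective gc.
Proof.
move=> i j [/eqP e1 /eqP e2]; rewrite !eqr_nat in e1 e2.
apply/val_inj; rewrite /= (divn_eq i w) (divn_eq j w).
by rewrite (eqP e1) (eqP e2).
Qed.


Lemma w0 : (0 < w)%N. Proof. by apply: leq_trans w2. Qed.

Lemma nat_predA (j : nat) : (j %% w != 0)%N ->
  (((j.-1) %% w).+1 = j %% w)%N /\ ((j.-1) %/ w = j %/ w)%N.
Proof.
move=> nz.
have e : (j.-1 = j %/ w * w + (j %% w).-1)%N.
  by rewrite {1}(divn_eq j w); move: nz; case: (j %% w)%N => //= k _; rewrite addnS.
have lt : ((j %% w).-1 < w)%N by apply: leq_ltn_trans (leq_pred _) (ltn_pmod _ w0).
split.
  by rewrite e modnMDl modn_small // prednK // lt0n.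
by rewrite e divnMDl ?w0 // (divn_small lt) addn0.
Qed.

Lemma nat_predB (j : nat) : (w <= j)%N ->
  ((j - w) %% w = j %% w)%N /\ (((j - w) %/ w).+1 = j %/ w)%N.
Proof.
move=> wj; have e : (j = 1 * w + (j - w))%N by rewrite mul1n subnKC.
split.
  by rewrite {2}e modnMDl.
by rewrite {2}e divnMDl ?w0.
Qed.

Lemma gc_int (t : 'I_n) : exists z1 z2 : int, gc t = (z1%:~R, z2%:~R).
Proof. by exists (t %% w)%:Z, (t %/ w)%:Z; rewrite -!pmulrn. Qed.

Lemma gc_Z2 : Z2_packing (2^-1) gc.
Proof. exact: Z2_of_int gc_inj gc_int. Qed.


Local Notation TT := (@tangent R n (2^-1) gc).

Definition Aset := [set j : 'I_n | (j %% w != 0)%N].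
Definition Bset := [set j : 'I_n | (w <= j)%N].
Definition fA (j : 'I_n) := (ordsub j 1, j).
Definition fB (j : 'I_n) := (ordsub j w, j).

Lemma fA_in j : j \in Aset -> fA j \in Pset TT.
Proof.
rewrite inE => nz.
have j0 : (0 < j)%N by move: nz; case: (nat_of_ord j) => //; rewrite mod0n.
have [e1 e2] := nat_predA nz.
rewrite inE /= subn1 prednK // leqnn /=.
apply/asboolT/tangent_of_dist.
  by apply/eqP => /(congr1 (@nat_of_ord n)) /=; lia.
rewrite /gc /= subn1 -e1 e2 subrr expr0n /= addr0 -addn1 natrD.
by rewrite opprD addrA subrr sub0r sqrrN expr1n.
Qed.

Lemma fB_in j : j \in Bset -> fB j \in Pset TT.
Proof.
rewrite inE => wj.
have [e1 e2] := nat_predB wj.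
have jw : (j - w < j)%N by rewrite ltn_subrL w0 /=; apply: leq_trans wj; exact: w0.
rewrite inE /= jw /=.
apply/asboolT/tangent_of_dist.
  by apply/eqP => /(congr1 (@nat_of_ord n)) /=; lia.
rewrite /gc /= e1 -e2 subrr expr0n /= add0r -addn1 natrD.
by rewrite opprD addrA subrr sub0r sqrrN expr1n.
Qed.

Lemma card_lower : (2 * n - w - h <= #|Pset TT|)%N.
Proof.
have dis : fA @: Aset :&: fB @: Bset = finset.set0.
  apply/setP => p; rewrite !inE; apply/negbTE/negP => /andP[/imsetP [j hj ->] /imsetP [k hk]].
  rewrite /fA /fB => -[e1 e2].
  rewrite -e2 in e1 hk.
  rewrite inE in hk; rewrite inE in hj; have := w2.
  have j0 : (0 < j)%N by move: hj; case: (nat_of_ord j) => //; rewrite mod0n.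
  lia.
have iA : {in Aset &, injective fA} by move=> x y _ _; rewrite /fA => -[].
have iB : {in Bset &, injective fB} by move=> x y _ _; rewrite /fB => -[].
have cU : #|fA @: Aset :|: fB @: Bset| = (#|Aset| + #|Bset|)%N.
  by rewrite cardsU dis cards0 subn0 !card_in_imset.
have sub : fA @: Aset :|: fB @: Bset \subset Pset TT.
  apply/fintype.subsetP => p; rewrite inE => /orP[] /imsetP [j hj ->].
    exact: fA_in.
  exact: fB_in.
have hA : (n - h <= #|Aset|)%N.
  have hc : (#|~: Aset| <= h)%N.
    apply: (@card_le_bound _ _ _ (fun j => j %/ w)%N).
      move=> x y; rewrite !inE !negbK => /eqP hx /eqP hy e.
      by apply/val_inj; rewrite /= (divn_eq x w) (divn_eq y w) hx hy e.
    move=> x _; rewrite ltn_divLR ?w0 // mulnC; exact: leq_trans (ltn_ord x) nwh.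
  have := cardsC Aset; rewrite card_ord; lia.
have hB : (n - w <= #|Bset|)%N.
  have hc : (#|~: Bset| <= w)%N.
    apply: (@card_le_bound _ _ _ (fun j => nat_of_ord j)).
      by move=> x y _ _; apply: val_inj.
    by move=> x; rewrite !inE -ltnNge.
  have := cardsC Bset; rewrite card_ord; lia.
have := subset_leq_card sub; rewrite cU; lia.
Qed.

End Constr.


Lemma floor_key (R : realType) (n w h : nat) : (2 <= w)%N ->
  ((w - 1) * (w - 1) < n)%N ->
  h = (if (n <= w * (w - 1))%N then (w - 1)%N else w) ->
  (w + h <= 2 * n)%N ->
  Num.floor (2 * n%:R - 2 * Num.sqrt (n%:R : R)) <= (2 * n - w - h)%N%:Z.
Proof.
move=> w2 hw eh wh.
rewrite -ltzD1 floor_lt_int rmorphD /= -pmulrn.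
have -> : ((2 * n - w - h)%N%:R : R) = 2 * n%:R - w%:R - h%:R.
  by rewrite -subnDA natrB // natrD natrM opprD addrA.
set s := Num.sqrt (n%:R : R).
have s0 : 0 <= s by apply: sqrtr_ge0.
have sE : s ^+ 2 = n%:R by rewrite sqr_sqrtr // ler0n.
suff : w%:R + h%:R - 1 < 2 * s by lra.
have w1 : (1 <= w)%N by apply: leq_trans w2.
move: eh; case: ifP => hc ->.
- have hw' : ((w - 1)%N%:R : R) ^+ 2 < n%:R by rewrite -natrX ltr_nat expnS expn1.
  rewrite natrB // -sE in hw' *.
  have : (w%:R : R) - 1 < s.
    rewrite ltNge; apply/negP => h1.
    have : 0 <= (w%:R : R) - 1 by rewrite subr_ge0 ler1n.
    nra.
  lra.
- have hc' : (w * (w - 1) < n)%N by rewrite ltnNge hc.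
  have hc2 : ((w%:R : R) * (w%:R - 1)) + 1 <= n%:R.
    have : ((w * (w - 1)).+1 <= n)%N by [].
    by rewrite -(ler_nat R) -addn1 natrD natrM natrB.
  rewrite -sE in hc2.
  have : (2 * w%:R - 1 : R) < 2 * s.
    rewrite ltNge; apply/negP => h1.
    have w1R : (1 : R) <= w%:R by rewrite ler1n.
    have : 0 <= (2 * w%:R - 1 : R) by lra.
    nra.
  lra.
Qed.

Lemma upper_all (R : realType) n r (c : 'I_n -> R * R) : LS_packing r c ->
  ((contact_number r c)%:Z <= Num.floor (2 * n%:R - 2 * Num.sqrt (n%:R : R)))%R.
Proof.
move=> hL; apply: upper_bound; first by case: hL.
exact: LS_angle.
Qed.

Unset Implicit Arguments.
Unset Strict Implicit.

Theorem corollary1 (R : realType) (n : nat) (hn : (1 < n)%N) :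
  let k := Num.floor (2 * n%:R - 2 * Num.sqrt (n%:R : R)) in
  largest_contact (@Z2_packing R n) k /\
  largest_contact (@TS_packing R n) k /\
  largest_contact (@LS_packing R n) k.
Proof.
move=> k.
have exP : exists m, (n <= m * m)%N by exists n; rewrite leq_pmull // ltnW.
case: (ex_minnP exP) => w nw wmin.
have w2 : (2 <= w)%N.
  rewrite ltnNge; apply/negP => w1.
  have : (w * w <= 1)%N by rewrite (leq_mul w1 w1).
  lia.
have hw : ((w - 1) * (w - 1) < n)%N.
  rewrite ltnNge; apply/negP => /wmin; lia.
set h := (if (n <= w * (w - 1))%N then (w - 1)%N else w).
have nwh : (n <= w * h)%N by rewrite /h; case: ifP => // /negbT; rewrite -ltnNge => /ltnW.
have wn : (w <= n)%N.
  have : (w <= (w - 1) * (w - 1) + 1)%N.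
    have : (2 <= w - 1 + 1)%N by lia.
    have : ((w - 1) * (w - 1) + 1 >= (w - 1) + 1)%N.
      rewrite leq_add2r; case: (w - 1)%N => // m; rewrite mulSn; lia.
    lia.
  lia.
have hw' : (h <= w)%N by rewrite /h; case: ifP => // _; lia.
have hn' : (h <= n)%N by apply: leq_trans hw' wn.
have wh : (w + h <= 2 * n)%N by lia.
have fk := @floor_key R n w h w2 hw erefl wh.
have cl := @card_lower R n w h w2 wn hn' nwh.
have Z2c := @gc_Z2 R n w.
have TSc := Z2_TS Z2c.
have LSc := TS_LS TSc.
have ce : (contact_number (2^-1) (@gc R n w))%:Z = k.
  apply: le_anti; apply/andP; split; first exact: upper_all.
  apply: le_trans fk _; rewrite lez_nat.
  by have -> : contact_number (2^-1) (@gc R n w) = #|Pset (@tangent R n (2^-1) (@gc R n w))|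
    by rewrite /contact_number /Pset cardsE.
split; [|split]; split.
- by exists (2^-1), (@gc R n w).
- by move=> r c /Z2_TS /TS_LS /upper_all.
- by exists (2^-1), (@gc R n w).
- by move=> r c /TS_LS /upper_all.
- by exists (2^-1), (@gc R n w).
- by move=> r c /upper_all.
Qed.
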